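(* Let $G$ be a connected graph, let $u\in V(G)$ be any vertex, and let $G'$ be obtained from $G$ by adding a new vertex $x$ and the edge $ux$. If $G$ forces an all-ones representation then $\operatorname{cdim}(G')=\operatorname{cdim}(G)+1$; otherwise $\operatorname{cdim}(G')=\operatorname{cdim}(G)$. In particular, the value of $\operatorname{cdim}(G')$ does not depend on the choice of $u$.
   Context: All graphs are finite, simple, undirected and nonempty. For distinct vertices $v,w$ of a graph $G$, $\kappa_G(v,w)$ is the maximum number of internally vertex-disjoint $v$–$w$ paths in $G$ (an edge $vw$ counts as one such path); $\kappa_G(v,v)=\infty$. For an ordered vertex set $W=(w_1,\ldots,w_k)$, $r_G(v,W)=[\kappa_G(v,w_1),\ldots,\kappa_G(v,w_k)]$. $W$ is resolving for $G$ if $r_G(v_1,W)=r_G(v_2,W)$ implies $v_1=v_2$. A (connectivity) basis is a resolving set of minimum cardinality, and $\operatorname{cdim}(G)$ is its cardinality. A graph $G$ forces an all-ones representation if for every basis $B$ of $G$ there is a vertex $v\in V(G)$ with $r_G(v,B)=[1,\ldots,1]$ (all entries equal to $1$); the one-vertex graph $K_1$ (only basis $\emptyset$, empty representation vector) counts as forcing an all-ones representation. *)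

(* Defs.v *)
From mathcomp Require Import all_boot.
From mathcomp Require Import boolp.
Set Implicit Arguments. Unset Strict Implicit. Unset Printing Implicit Defensive.

Section Conn.
Variables (T : finType) (e : rel T).

Definition simple_graph := symmetric e /\ irreflexive e.
Definition connected_graph := forall x y : T, connect e x y.

Definition is_path (v w : T) (p : seq T) : bool :=
  [&& path e v p, uniq (v :: p) & last v p == w].

Definition interior (v : T) (p : seq T) : seq T := behead (belast v p).

Definition disjoint_paths (v w : T) (ps : seq (seq T)) : Prop :=
  [/\ uniq ps, all (is_path v w) ps &
      pairwise (fun p q => [disjoint interior v p & interior v q]) ps].

Definition has_k_paths (v w : T) (k : nat) : Prop :=
  exists ps, size ps = k /\ disjoint_paths v w ps.

(* Local connectivity; None stands for infinity (kappa v v = oo).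
   Any family of such paths has fewer than #|T|.+2 members (at most one
   path with empty interior, the others have nonempty disjoint interiors),
   so the bounded max is the true maximum. *)
Definition kappa (v w : T) : option nat :=
  if v == w then None
  else Some (\max_(k < #|T|.+2 | `[< has_k_paths v w k >]) (k : nat)).

Definition rep (v : T) (W : {set T}) : seq (option nat) :=
  [seq kappa v w | w <- enum W].

Definition resolving (W : {set T}) : Prop :=
  forall v1 v2 : T, rep v1 W = rep v2 W -> v1 = v2.

Definition basis (B : {set T}) : Prop :=
  resolving B /\ forall W : {set T}, resolving W -> #|B| <= #|W|.

(* connectivity dimension: minimum size of a resolving set
   (setT is always resolving, so the arg min is well defined) *)
Definition cdim : nat :=
  #| [arg min_(W < [set: T] | `[< resolving W >]) #|W| ] |.

Definition forces_all_ones : Prop :=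
  forall B : {set T}, basis B -> exists v : T, rep v B = nseq #|B| (Some 1).

End Conn.

(* G' : add a new vertex x (= None) adjacent only to u *)
Definition add_pendant (T : finType) (e : rel T) (u : T) : rel (option T) :=
  fun a b => match a, b with
             | Some x, Some y => e x y
             | Some x, None => x == u
             | None, Some y => y == u
             | None, None => false
             end.

(* Main.v *)
Require Import Defs.
From mathcomp Require Import all_boot.
From mathcomp Require Import boolp zify.
Set Implicit Arguments. Unset Strict Implicit. Unset Printing Implicit Defensive.

Lemma kappa_char (T : finType) (e : rel T) (a b : T) (m : nat) :
  a != b -> has_k_paths e a b m -> (forall k, has_k_paths e a b k -> k <= m) ->
  m < #|T|.+2 -> kappa e a b = Some m.
Proof.
move=> ab hm hk mlt; rewrite /kappa (negbTE ab); congr Some; apply/eqP.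
rewrite eqn_leq; apply/andP; split.
  by apply/bigmax_leqP => i /asboolP /hk.
exact: (@leq_bigmax_cond _ _ (fun k : 'I_#|T|.+2 => (k : nat)) (Ordinal mlt) (asboolT hm)).
Qed.

Lemma kappa_refl (T : finType) (e : rel T) a : kappa e a a = None.
Proof. by rewrite /kappa eqxx. Qed.

Lemma kappa_None (T : finType) (e : rel T) a b : (kappa e a b == None) = (a == b).
Proof. by rewrite /kappa; case: (a == b). Qed.

Lemma L1 (T : finType) (e : rel T) a b p0 k :
  (forall p, is_path e a b p -> p = p0) -> has_k_paths e a b k -> k <= 1.
Proof.
move=> H [ps [<- [u al _]]].
case: ps u al => [|p [|q r]] //= /andP[pn _] /and3P[pp qp _].
by rewrite (H _ pp) (H _ qp) inE eqxx in pn.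
Qed.

Lemma L2 (T : finType) (e : rel T) a b c k :
  (forall p, is_path e a b p -> c \in interior a p) -> has_k_paths e a b k -> k <= 1.
Proof.
move=> H [ps [<- [u al pw]]].
case: ps u al pw => [|p [|q r]] //= _ /and3P[pp qp _] /andP[/andP[d _] _].
by move: (disjointFr d (H _ pp)); rewrite (H _ qp).
Qed.

Lemma interior_rcons (T : finType) (x y : T) q : interior x (rcons q y) = q.
Proof. by rewrite /interior belast_rcons. Qed.

Lemma map_nseq_in (S : eqType) (R : Type) (f : S -> R) s c :
  map f s = nseq (size s) c <-> {in s, forall x, f x = c}.
Proof.
elim: s => [|y s IH] /=; first by split=> // _ x.
split.
  case=> h1 /IH h2 x; rewrite inE => /orP[/eqP->//|]; exact: h2.
move=> H; rewrite H ?inE ?eqxx //; congr cons; apply/IH => x xs; apply: H.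
by rewrite inE xs orbT.
Qed.

Lemma rep_eq (T : finType) (e : rel T) v1 v2 (W : {set T}) :
  rep e v1 W = rep e v2 W <-> (forall w, w \in W -> kappa e v1 w = kappa e v2 w).
Proof.
rewrite /rep; split.
  by move/eq_in_map => H w wW; apply: H; rewrite mem_enum.
by move=> H; apply/eq_in_map => w; rewrite mem_enum; apply: H.
Qed.

Lemma rep_ones (T : finType) (e : rel T) v (W : {set T}) :
  rep e v W = nseq #|W| (Some 1) <-> (forall w, w \in W -> kappa e v w = Some 1).
Proof.
rewrite /rep cardE map_nseq_in; split=> H w.
  by move=> wW; apply: H; rewrite mem_enum.
by rewrite mem_enum; apply: H.
Qed.

Lemma has_k_bound (T : finType) (e : rel T) v w k :
  has_k_paths e v w k -> k < #|T|.+2.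
Proof.
move=> [ps [<- [u al pw]]].
set P := fun p : seq T => interior v p == [::].
rewrite -(count_predC P ps).
have h1 : count P ps <= 2.
  rewrite -size_filter -[2]/(size [:: [::]; [:: w]]).
  apply: uniq_leq_size; first exact: filter_uniq.
  move=> p; rewrite mem_filter => /andP[Pp pps].
  move/allP: al => /(_ p pps) /and3P[_ _ /eqP lp].
  move: Pp lp; rewrite /P /interior.
  case: p {pps} => [|x [|y r]] //=.
  by move=> _ ->; rewrite !inE eqxx orbT.
set qs := filter (predC P) ps.
set hs := map (fun p => head v (interior v p)) qs.
have hin : forall p, p \in qs -> head v (interior v p) \in interior v p.
  move=> p; rewrite mem_filter /= /P; case: (interior v p) => //= x r _.
  by rewrite inE eqxx.
have hv : v \notin hs.
  apply/mapP => -[p pq hp].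
  move: (pq); rewrite mem_filter => /andP[Pp pps].
  move/allP: al => /(_ p pps) /and3P[_ un _].
  move: Pp hp un; rewrite /P /interior.
  case: p {pq pps} => [|x [|y r]] //= _ ->.
  by rewrite inE eqxx.
have hu : uniq hs.
  rewrite uniq_pairwise pairwise_map.
  have pq : pairwise (fun p q => [disjoint interior v p & interior v q]) qs.
    exact: pairwise_filter.
  apply: (sub_in_pairwise _ (allss qs)) pq.
  move=> p q pq qq /= d; apply/negP => /eqP eh.
  have := disjointFr d (hin _ pq).
  by rewrite eh (hin _ qq).
have hc : size (v :: hs) <= #|T|.
  have := max_card (mem (v :: hs)).
  by rewrite (card_uniqP _) //= hv hu.
move: hc; rewrite /= size_map size_filter => hc.

lia. Qed.

Lemma path_some (T : finType) (e : rel T) u v p :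
  path (add_pendant e u) (Some v) (map Some p) = path e v p.
Proof. by rewrite path_map; apply: eq_path. Qed.

Lemma is_path_some (T : finType) (e : rel T) u v w p :
  is_path (add_pendant e u) (Some v) (Some w) (map Some p) = is_path e v w p.
Proof.
rewrite /is_path path_some -map_cons (map_inj_uniq (@Some_inj _)) last_map.
by rewrite (inj_eq (@Some_inj _)).
Qed.

Lemma interior_some (T : finType) v (p : seq T) :
  interior (Some v) (map Some p) = map Some (interior v p).
Proof. by rewrite /interior belast_map behead_map. Qed.

Lemma disjoint_some (T : finType) (a b : seq T) :
  [disjoint map Some a & map Some b] = [disjoint a & b].
Proof.
rewrite !disjoint_has has_map; congr (~~ _); apply: eq_has => x /=.
by rewrite mem_map //; exact: Some_inj.
Qed.

Lemma noNone (T : finType) (e : rel T) u v w p :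
  is_path (add_pendant e u) (Some v) (Some w) p -> None \notin p.
Proof.
case/and3P=> pp un /eqP lp; apply/negP => pin; move: pp un lp; case/splitPr: pin => p1 p2.
rewrite cat_path last_cat /=.
case: p2 => [|y p3] /=; first by [].
case/and3P=> _ h1 /andP[h2 _].
have yu : y = Some u by case: y h2 => //= z /eqP ->.
have zu : last (Some v) p1 = Some u.
  by case: (last (Some v) p1) h1 => //= z /eqP ->.
move=> un _; have : uniq (Some v :: p1 ++ [:: None, y & p3]) by [].
rewrite -cat_cons cat_uniq => /and3P[_ /hasPn H _].
have := H (Some u); rewrite yu !inE eqxx orbT => /(_ isT).
by rewrite -in_cons -zu mem_last.
Qed.

Lemma disj_some (T : finType) (e : rel T) u v w qs :
  disjoint_paths (add_pendant e u) (Some v) (Some w) (map (map Some) qs) <->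
  disjoint_paths e v w qs.
Proof.
rewrite /disjoint_paths (map_inj_uniq (inj_map (@Some_inj _))) all_map pairwise_map.
have -> : all (preim (map Some) (is_path (add_pendant e u) (Some v) (Some w))) qs
        = all (is_path e v w) qs.
  by apply: eq_all => p /=; rewrite is_path_some.
have -> : pairwise (relpre (map Some)
            (fun p q => [disjoint interior (Some v) p & interior (Some v) q])) qs
        = pairwise (fun p q => [disjoint interior v p & interior v q]) qs.
  by apply: eq_pairwise => p q /=; rewrite !interior_some disjoint_some.
by [].
Qed.

Lemma unsome (T : eqType) (p : seq (option T)) :
  None \notin p -> map Some (pmap id p) = p.
Proof.
elim: p => [|[x|] r IH] //=; rewrite inE negb_or => /andP[_ h]; by rewrite IH.
Qed.

Lemma has_some (T : finType) (e : rel T) u v w k :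
  has_k_paths (add_pendant e u) (Some v) (Some w) k <-> has_k_paths e v w k.
Proof.
split.
  move=> [ps [sz D]].
  have E : ps = map (map Some) (map (pmap id) ps).
    rewrite -map_comp -{1}[ps]map_id; apply/eq_in_map => p pps /=.
    case: D => _ /allP /(_ p pps) /noNone nN _; by rewrite unsome.
  exists (map (pmap id) ps); split; first by rewrite size_map.
  by apply/(@disj_some _ _ u); rewrite -E.
move=> [qs [sz D]]; exists (map (map Some) qs); split; first by rewrite size_map.
exact/disj_some.
Qed.

Lemma K1 (T : finType) (e : rel T) u v w :
  kappa (add_pendant e u) (Some v) (Some w) = kappa e v w.
Proof.
rewrite /kappa (inj_eq (@Some_inj _)); case: eqP => // _; congr Some.
rewrite (@big_ord_widen_cond _ _ _ #|T|.+2 #|{: option T}|.+2 (fun k => `[< has_k_paths e v w k >]) (fun k => k)); last by rewrite card_option.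
apply: eq_bigl => i /=.
apply/idP/idP.
  move/asboolP/has_some => h; apply/andP; split; first exact/asboolP.
  exact: has_k_bound h.
by case/andP => /asboolP h _; apply/asboolP/has_some.
Qed.

Lemma upath (T : finType) (e : rel T) a b :
  connected_graph e -> exists p, is_path e a b p.
Proof.
move=> /(_ a b) /connectP [p pp ->].
case/shortenP: pp => p' pp' up' _; exists p'.
by rewrite /is_path pp' up' eqxx.
Qed.

Lemma has1 (T : finType) (e : rel T) a b p : is_path e a b p -> has_k_paths e a b 1.
Proof. by move=> h; exists [:: p]; split=> //; split=> //=; rewrite h. Qed.

Lemma K2 (T : finType) (e : rel T) u v : connected_graph e ->
  kappa (add_pendant e u) (Some v) None = Some 1.
Proof.
move=> cg; apply: kappa_char => //.
- have [p /and3P[pp up /eqP lp]] := upath v u cg.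
  apply: (has1 (p := rcons (map Some p) None)).
  rewrite /is_path rcons_path path_some last_map lp /= eqxx pp /=.
  move: up => /andP[vp up]; have up2 : uniq p := up.
  rewrite last_rcons eqxx andbT rcons_uniq (map_inj_uniq (@Some_inj _)) up2 andbT.
  rewrite mem_rcons inE /= (mem_map (@Some_inj _)) vp /=.
  by apply/mapP => -[].
- case: (eqVneq v u) => [->|vu] k.
    apply: (L1 (p0 := [:: None])) => p /and3P[pp up /eqP lp].
    case/lastP: p pp up lp => [|q y] //; rewrite last_rcons => pp up yN; subst y.
    move: pp; rewrite rcons_path => /andP[_ hl].
    have lq : last (Some u) q = Some u by case: (last (Some u) q) hl => //= z /eqP ->.
    clear hl; case: q lq up => [//|z q] lq.
    rewrite -rcons_cons rcons_uniq => /andP[_] /andP[/negP nu _]; exfalso; apply: nu.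
    by rewrite -lq /= mem_last.
  apply: (L2 (c := Some u)) => p /and3P[pp up /eqP lp].
  case/lastP: p pp up lp => [|q y] //; rewrite last_rcons interior_rcons => pp up yN; subst y.
  move: pp; rewrite rcons_path => /andP[_ hl].
  have lq : last (Some v) q = Some u by case: (last (Some v) q) hl => //= z /eqP ->.
  have := mem_last (Some v) q; rewrite lq inE => /orP[/eqP[] /eqP|//].
  by rewrite eq_sym (negbTE vu).
Qed.

Lemma K3 (T : finType) (e : rel T) u w : connected_graph e ->
  kappa (add_pendant e u) None (Some w) = Some 1.
Proof.
move=> cg; apply: kappa_char => //.
- have [p /and3P[pp up /eqP lp]] := upath u w cg.
  apply: (has1 (p := Some u :: map Some p)).
  rewrite /is_path /= eqxx path_some pp /= last_map lp eqxx andbT.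
  move: up => /andP[vp up]; have up2 : uniq p := up.
  rewrite (map_inj_uniq (@Some_inj _)) up2 (mem_map (@Some_inj _)) vp andbT.
  rewrite andbT inE negb_or /=; by apply/mapP => -[].
- case: (eqVneq w u) => [->|wu] k.
    apply: (L1 (p0 := [:: Some u])) => p /and3P[pp up /eqP lp].
    case: p pp up lp => [//|y q] /= /andP[hy _].
    have -> : y = Some u by case: y hy => // z /eqP ->.
    case: q => [//|z q] /= /and3P[_ /negP nu _] lq.
    by exfalso; apply: nu; rewrite -lq mem_last.
  apply: (L2 (c := Some u)) => p /and3P[pp up /eqP lp].
  case: p pp up lp => [//|y q] /= /andP[hy _].
  have -> : y = Some u by case: y hy => // z /eqP ->.
  case: q => [|z q] /=.
    by move=> _ [] /eqP; rewrite eq_sym (negbTE wu).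
  by move=> _ _; rewrite /interior /= inE eqxx.
Qed.

Lemma resP (T : finType) (e : rel T) (W : {set T}) :
  resolving e W <-> forall v1 v2, (forall w, w \in W -> kappa e v1 w = kappa e v2 w) -> v1 = v2.
Proof.
split=> H v1 v2.
  by move=> h; apply: H; apply/rep_eq.
by move/rep_eq; apply: H.
Qed.

Lemma resolving_setT (T : finType) (e : rel T) : resolving e [set: T].
Proof.
apply/resP => v1 v2 /(_ v1 (in_setT _)); rewrite kappa_refl => /esym/eqP.
by rewrite kappa_None => /eqP.
Qed.

Lemma cdim_min (T : finType) (e : rel T) W : resolving e W -> cdim e <= #|W|.
Proof.
move=> rW; rewrite /cdim.
case: arg_minnP => [|W0 _ hmin]; first exact/asboolT/resolving_setT.
exact/hmin/asboolT.
Qed.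

Lemma cdim_att (T : finType) (e : rel T) : exists W, resolving e W /\ #|W| = cdim e.
Proof.
rewrite /cdim.
case: arg_minnP => [|W0 /asboolP h _]; first exact/asboolT/resolving_setT.
by exists W0.
Qed.

Lemma memS (T : finType) (B : {set T}) w : (Some w \in Some @: B) = (w \in B).
Proof. by rewrite (mem_imset _ _ (@Some_inj _)). Qed.

Lemma memN (T : finType) (B : {set T}) : (None \in Some @: B) = false.
Proof. by apply/imsetP => -[]. Qed.

Lemma cardR1 (T : finType) (W' : {set option T}) :
  #|W'| = (None \in W') + #|[set v | Some v \in W']|.
Proof.
rewrite (cardsD1 None); congr addn.
have -> : W' :\ None = Some @: [set v | Some v \in W'].
  apply/setP => -[y|]; rewrite !inE ?memS ?memN ?inE //=.
by rewrite card_imset //; exact: Some_inj.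
Qed.

Lemma R1 (T : finType) (e : rel T) u (W' : {set option T}) : connected_graph e ->
  resolving (add_pendant e u) W' -> resolving e [set v | Some v \in W'].
Proof.
move=> cg /resP H; apply/resP => v1 v2 h.
suff : Some v1 = Some v2 by case.
apply: H => -[w|] ww.
  by rewrite !K1; apply: h; rewrite inE.
by rewrite !K2.
Qed.

Lemma R2 (T : finType) (e : rel T) u (B : {set T}) : connected_graph e ->
  resolving e B -> resolving (add_pendant e u) (None |: (Some @: B)).
Proof.
move=> cg /resP H; apply/resP => -[v1|] [v2|] h //.
- congr Some; apply: H => w wB.
  by rewrite -!(K1 e u); apply: h; rewrite !inE memS wB orbT.
- by move: (h None (setU11 _ _)); rewrite (K2 _ _ cg) kappa_refl.
- by move: (h None (setU11 _ _)); rewrite (K2 _ _ cg) kappa_refl.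
Qed.

Lemma R3 (T : finType) (e : rel T) u (B : {set T}) : connected_graph e ->
  resolving e B -> (forall v, ~ (forall w, w \in B -> kappa e v w = Some 1)) ->
  resolving (add_pendant e u) (Some @: B).
Proof.
move=> cg /resP H N; apply/resP => -[v1|] [v2|] h //.
- congr Some; apply: H => w wB.
  by rewrite -!(K1 e u); apply: h; rewrite memS.
- exfalso; apply: (N v1) => w wB.
  by rewrite -(K1 e u) h ?memS // K3.
- exfalso; apply: (N v2) => w wB.
  by rewrite -(K1 e u) -h ?memS // K3.
Qed.

Lemma main_u (T : finType) (e : rel T) (u : T) : connected_graph e ->
  (forces_all_ones e -> cdim (add_pendant e u) = (cdim e).+1) /\
  (~ forces_all_ones e -> cdim (add_pendant e u) = cdim e).
Proof.
move=> cg.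
have cA : cdim e <= cdim (add_pendant e u).
  have [W' [rW <-]] := cdim_att (add_pendant e u).
  apply: leq_trans (cdim_min (R1 cg rW)) _.
  by rewrite (cardR1 W') leq_addl.
have cB : cdim (add_pendant e u) <= (cdim e).+1.
  have [B [rB <-]] := cdim_att e.
  apply: leq_trans (cdim_min (R2 (u:=u) cg rB)) _.
  by rewrite cardsU1 memN card_imset //; exact: Some_inj.
split.
  move=> fa; apply/eqP; rewrite eqn_leq cB /=; rewrite ltnNge; apply/negP => lec.
  have [W' [rW cW]] := cdim_att (add_pendant e u).
  have rW1 := R1 cg rW.
  have cmin := cdim_min rW1.
  move: cW; rewrite (cardR1 W'); case: (boolP (None \in W')) => NW /= cW.
    by have := leq_trans lec cmin; rewrite -cW add1n ltnn.
  rewrite add0n in cW.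
  have bW : basis e [set v | Some v \in W'].
    split=> // W2 rW2; apply: leq_trans (cdim_min rW2).
    by rewrite cW; apply: leq_trans lec.
  have [v /rep_ones hv] := fa _ bW.
  have : Some v = None.
    apply: (proj1 (resP _ _) rW) => -[w|] ww; last by rewrite ww in NW.
    by rewrite (K1 e u) (K3 _ _ cg) hv // inE.
  by [].
move=> nf.
have [B [bB nB]] : exists B, basis e B /\ ~ exists v, rep e v B = nseq #|B| (Some 1).
  case: (pselect (exists B, basis e B /\ ~ exists v, rep e v B = nseq #|B| (Some 1))) => // H.
  exfalso; apply: nf => B bB.
  case: (pselect (exists v, rep e v B = nseq #|B| (Some 1))) => // nv.
  by exfalso; apply: H; exists B.
have cBB : #|B| = cdim e.
  have [W [rW cW]] := cdim_att e.
  by apply/eqP; rewrite eqn_leq -{1}cW (proj2 bB _ rW) /=; apply: cdim_min; case: bB.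
apply/eqP; rewrite eqn_leq cA andbT.
have rB' := R3 (u:=u) cg (proj1 bB) (fun v h => nB (ex_intro _ v (proj2 (rep_ones _ _ _) h))).
apply: leq_trans (cdim_min rB') _.
by rewrite card_imset ?cBB //; exact: Some_inj.
Qed.

Theorem mainTheorem12 (T : finType) (e : rel T) :
  simple_graph e -> 0 < #|T| -> connected_graph e ->
  (forall u : T,
     (forces_all_ones e -> cdim (add_pendant e u) = (cdim e).+1) /\
     (~ forces_all_ones e -> cdim (add_pendant e u) = cdim e)) /\
  (forall u1 u2 : T, cdim (add_pendant e u1) = cdim (add_pendant e u2)).
Proof.
move=> _ _ cg; split=> [u|u1 u2]; first exact: main_u.
have [f1 n1] := main_u u1 cg; have [f2 n2] := main_u u2 cg.
case: (pselect (forces_all_ones e)) => h.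
  by rewrite f1 // f2.
by rewrite n1 // n2.
Qed.
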